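(* Let $\mathfrak{S}=(\mathcal{X},\mathsf{S},\gamma,(\Lambda_{a})_{a\in\mathcal{A}})$ be a spectral decomposition system for the Euclidean space $\mathfrak{H}$, let $\varphi\colon\mathcal{X}\to\left]-\infty,+\infty\right]$ be proper and $\mathsf{S}$-invariant, and let $Y\in\mathfrak{H}$. Set $\mathcal{M}=\operatorname{Argmin}(\varphi\circ\gamma-\langle\cdot,Y\rangle)$ and $M=\operatorname{Argmin}(\varphi-\langle\cdot,\gamma(Y)\rangle)$. Then: (i) $\inf_{X\in\mathfrak{H}}\big(\varphi(\gamma(X))-\langle X,Y\rangle\big)=\inf_{x\in\mathcal{X}}\big(\varphi(x)-\langle x,\gamma(Y)\rangle\big)$; (ii) for every $X\in\mathfrak{H}$: $X\in\mathcal{M}$ if and only if $\gamma(X)\in M$ and there exists $a\in\mathcal{A}$ such that $X=\Lambda_a\gamma(X)$ and $Y=\Lambda_a\gamma(Y)$; (iii) for every $x\in\mathcal{X}$ and every $b\in\mathcal{A}_Y$: $\Lambda_bx\in\mathcal{M}$ if and only if $x\in M$; (iv) $\mathcal{M}=\{\Lambda_bx : x\in M,\ b\in\mathcal{A}_Y\}$; (v) $\mathcal{M}$ is convex if and only if $M$ is convex; (vi) $\mathcal{M}$ is a singleton if and only if $M$ is a singleton.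
   Context: A Euclidean space is a finite-dimensional real inner product space; inner products are written $\langle\cdot,\cdot\rangle$ and norms $\|\cdot\|$. Let $\mathfrak{H}$ and $\mathcal{X}$ be Euclidean spaces, let $\mathsf{S}$ be a group acting on $\mathcal{X}$ by linear isometries, let $\gamma\colon\mathfrak{H}\to\mathcal{X}$, and let $(\Lambda_a)_{a\in\mathcal{A}}$ be a family of linear operators from $\mathcal{X}$ to $\mathfrak{H}$. The orbit of $x$ is $\mathsf{S}\cdot x=\{s\cdot x: s\in\mathsf{S}\}$; a map $f$ on $\mathcal{X}$ is $\mathsf{S}$-invariant if $f(s\cdot x)=f(x)$ for all $s,x$. The tuple is a spectral decomposition system for $\mathfrak{H}$ if: [A] every $\Lambda_a$ is an isometry; [B] there exists an $\mathsf{S}$-invariant $\tau\colon\mathcal{X}\to\mathcal{X}$ with $\tau(x)\in\mathsf{S}\cdot x$ for all $x$ and $\gamma\circ\Lambda_a=\tau$ for all $a$; [C] for every $X\in\mathfrak{H}$ there is $a$ with $X=\Lambda_a\gamma(X)$; [D] $\langle X,Y\rangle\leq\langle\gamma(X),\gamma(Y)\rangle$ for all $X,Y\in\mathfrak{H}$. For $X\in\mathfrak{H}$, $\mathcal{A}_X=\{a\in\mathcal{A}: X=\Lambda_a\gamma(X)\}$. A function is proper if it never takes $-\infty$ and is finite somewhere. For $g\colon\mathcal{H}\to\left]-\infty,+\infty\right]$, $\operatorname{Argmin}g=\{x: g(x)=\inf g(\mathcal{H})\}$ if $\inf g(\mathcal{H})<+\infty$, and $\operatorname{Argmin}g=\varnothing$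 otherwise. *)

(* Defs.v *)
From HB Require Import structures.
From mathcomp Require Import all_boot all_order all_algebra.
From mathcomp Require Import all_classical all_reals all_analysis.
Set Implicit Arguments. Unset Strict Implicit. Unset Printing Implicit Defensive.
Import Order.TTheory GRing.Theory Num.Theory.
Local Open Scope classical_set_scope.
Local Open Scope ring_scope.

Definition inner_product (R : realType) (V : lmodType R) (ip : V -> V -> R) :=
  [/\ (forall x y, ip x y = ip y x),
      (forall a x y z, ip (a *: x + y) z = a * ip x z + ip y z),
      (forall x, 0 <= ip x x) &
      (forall x, ip x x = 0 -> x = 0)].

(* A Euclidean space is a finite-dimensional real inner product space:
   modelled as a vectType R (finite-dimensional) together with an inner
   product [ip] satisfying [inner_product ip]. *)

Definition ipnorm (R : realType) (V : lmodType R) (ip : V -> V -> R) (x : V) : R :=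
  Num.sqrt (ip x x).

Definition group_action_by_linear_isometries (R : realType) (V : lmodType R)
  (ip : V -> V -> R) (S : Type) (mul : S -> S -> S) (one : S) (inv : S -> S)
  (act : S -> V -> V) :=
  [/\
      (forall a b c, mul a (mul b c) = mul (mul a b) c),
      (forall a, mul one a = a /\ mul a one = a) &
      (forall a, mul (inv a) a = one /\ mul a (inv a) = one)] /\
  [/\
      (forall x, act one x = x),
      (forall s t x, act (mul s t) x = act s (act t x)),
      (forall s a x y, act s (a *: x + y) = a *: act s x + act s y) &
      (forall s x, ipnorm ip (act s x) = ipnorm ip x)].

Definition orbit (V : Type) (S : Type) (act : S -> V -> V) (x : V) : set V :=
  [set act s x | s in setT].

Definition S_invariant (V T : Type) (S : Type) (act : S -> V -> V) (f : V -> T) :=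
  forall s x, f (act s x) = f x.

Definition spectral_decomposition_system (R : realType) (H X : lmodType R)
  (ipH : H -> H -> R) (ipX : X -> X -> R) (S : Type) (act : S -> X -> X)
  (gamma : H -> X) (A : Type) (Lambda : A -> {linear X -> H}) :=
  [/\ (forall a x, ipnorm ipH (Lambda a x) = ipnorm ipX x),
      (exists tau : X -> X, [/\ S_invariant act tau,
                   (forall x, orbit act x (tau x)) &
                   (forall a x, gamma (Lambda a x) = tau x)]),
      (forall Z : H, exists a, Z = Lambda a (gamma Z)) &
      (* [D] *) (forall Z W : H, ipH Z W <= ipX (gamma Z) (gamma W))].

Definition A_of (R : realType) (H X : lmodType R) (gamma : H -> X) (A : Type)
  (Lambda : A -> {linear X -> H}) (Z : H) : set A :=
  [set a | Z = Lambda a (gamma Z)].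

Definition proper_fun (R : realType) (T : Type) (f : T -> \bar R) :=
  (forall x, f x != -oo%E) /\ (exists x, f x \is a fin_num).

Definition Argmin (R : realType) (T : Type) (g : T -> \bar R) : set T :=
  if (ereal_inf (range g) < +oo)%E then [set x | g x = ereal_inf (range g)]
  else set0.

Definition is_singleton (T : Type) (C : set T) := exists x, C = [set x].

(* Main.v *)
Require Import Defs.
From HB Require Import structures.
From mathcomp Require Import all_boot all_order all_algebra.
From mathcomp Require Import all_classical all_reals all_analysis.
From mathcomp Require Import ring lra.
Import Order.TTheory GRing.Theory Num.Theory.
Local Open Scope classical_set_scope.
Local Open Scope ring_scope.
Local Open Scope convex_scope.
Set Implicit Arguments. Unset Strict Implicit.
Import numFieldNormedType.Exports.
Import VectorInternalTheory.
Section IP.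
Variables (R : realType) (V : lmodType R) (ip : V -> V -> R).
Hypothesis hip : inner_product ip.

Lemma ipC x y : ip x y = ip y x.
Proof. by case: hip. Qed.

Lemma ipAl a x y z : ip (a *: x + y) z = a * ip x z + ip y z.
Proof. by case: hip. Qed.

Lemma ip0l z : ip 0 z = 0.
Proof.
have := ipAl 1 0 0 z; rewrite scaler0 addr0 mul1r => h; lra.
Qed.

Lemma ipDl x y z : ip (x + y) z = ip x z + ip y z.
Proof. by rewrite -[x]scale1r ipAl mul1r scale1r. Qed.

Lemma ipZl a x z : ip (a *: x) z = a * ip x z.
Proof. by rewrite -[a *: x]addr0 ipAl ip0l addr0. Qed.

Lemma ipNl x z : ip (- x) z = - ip x z.
Proof. by rewrite -scaleN1r ipZl mulN1r. Qed.

Lemma ipBl x y z : ip (x - y) z = ip x z - ip y z.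
Proof. by rewrite ipDl ipNl. Qed.

Lemma ip0r z : ip z 0 = 0.
Proof. by rewrite ipC ip0l. Qed.

Lemma ipDr x y z : ip z (x + y) = ip z x + ip z y.
Proof. by rewrite ipC ipDl !(ipC z). Qed.

Lemma ipZr a x z : ip z (a *: x) = a * ip z x.
Proof. by rewrite ipC ipZl ipC. Qed.

Lemma ipNr x z : ip z (- x) = - ip z x.
Proof. by rewrite ipC ipNl ipC. Qed.

Lemma ipBr x y z : ip z (x - y) = ip z x - ip z y.
Proof. by rewrite ipDr ipNr. Qed.

Lemma ip_ge0 x : 0 <= ip x x.
Proof. by case: hip. Qed.

Lemma ip_eq0 x : ip x x = 0 -> x = 0.
Proof. by case: hip => _ _ _; apply. Qed.

Lemma ip_le0 x : ip x x <= 0 -> x = 0.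
Proof. by move=> h; apply: ip_eq0; apply/eqP; rewrite eq_le h ip_ge0. Qed.

Lemma ip_sqD x y : ip (x + y) (x + y) = ip x x + 2 * ip x y + ip y y.
Proof. by rewrite !ipDl !ipDr (ipC y x); ring. Qed.

Lemma ip_sqB x y : ip (x - y) (x - y) = ip x x - 2 * ip x y + ip y y.
Proof. by rewrite !ipBl !ipBr (ipC y x); ring. Qed.

Lemma ip_CS x y : ip x y ^+ 2 <= ip x x * ip y y.
Proof.
have [y0|] := eqVneq (ip y y) 0.
  by rewrite (ip_eq0 y0) ip0r expr0n /= ip0r mulr0.
move=> yn0; have yp : 0 < ip y y by rewrite lt_neqAle eq_sym yn0 ip_ge0.
set t := ip x y / ip y y.
have := ip_ge0 (x - t *: y).
rewrite ip_sqB ipZr ipZl ipZr /t => h.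
have : 0 <= (ip x x - 2 * (ip x y / ip y y * ip x y) +
      ip x y / ip y y * (ip x y / ip y y * ip y y)) * ip y y.
  by rewrite mulr_ge0 // ltW.
have -> : (ip x x - 2 * (ip x y / ip y y * ip x y) +
   ip x y / ip y y * (ip x y / ip y y * ip y y)) * ip y y =
   ip x x * ip y y - ip x y ^+ 2.
  by field.
by rewrite subr_ge0.
Qed.

End IP.

Lemma lip_cont (R : realType) (V W : normedModType R) (f : V -> W) (k : R) :
  (forall x y, `|f x - f y| <= k * `|x - y|) -> continuous f.
Proof.
move=> hf x; apply/cvgrPdist_lt => e e0.
set K := `|k| + 1.
have K0 : 0 < K by rewrite /K ltr_wpDl.
have d0 : 0 < e / K by rewrite divr_gt0.
near=> y.
have hy : `|x - y| < e / K by near: y; exact: (@cvgr_dist_lt _ _ _ (nbhs x) _ id x cvg_id _ d0).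
apply: (le_lt_trans (hf x y)).
apply: (@le_lt_trans _ _ (K * `|x - y|)).
  apply: ler_wpM2r => //; rewrite /K; apply: (le_trans (ler_norm k)); lra.
by rewrite -ltr_pdivlMl // mulrC.
Unshelve. all: by end_near.
Qed.
Lemma min_compact (R : realType) (A : set R) : compact A -> A !=set0 ->
  (forall x, A x -> 0 <= x) -> exists2 m, A m & forall x, A x -> m <= x.
Proof.
move=> cA nA pA.
have clA : closed A by apply: compact_closed => //; exact: hausdorff_space.
exists (inf A).
  apply: itv_closed_infimums => //; split.
  - by move=> x Ax; apply: inf_lbound => //; exists 0 => y /pA.
  - by move=> y ly; apply: lb_le_inf.
by move=> x Ax; apply: inf_lbound => //; exists 0 => y /pA.
Qed.
Lemma entry_le (R : realType) n (p : 'rV[R]_n) i : `|p 0 i| <= `|p|.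
Proof.
have -> : `|p| = mx_norm p by [].
rewrite mx_normrE.
exact: (le_bigmax _ (fun ij : 'I_1 * 'I_n => `|p ij.1 ij.2|) (0, i)).
Qed.
Lemma bnd_set (R : realType) n (A : set 'rV[R]_n) r :
  (forall p, A p -> `|p| <= r) -> bounded_set A.
Proof.
move=> hr; rewrite /bounded_near /=; near=> M => p Ap.
apply: le_trans (hr _ Ap) _; near: M; apply: nbhs_pinfty_ge; exact: num_real.
Unshelve. all: by end_near.
Qed.

Lemma row_delta (R : realType) n (p : 'rV[R]_n) : p = \sum_j p 0 j *: delta_mx 0 j.
Proof. by rewrite {1}(matrix_sum_delta p) big_ord1. Qed.

Lemma phi_cont (R : realType) n :
  continuous (fun q : ('rV[R]_n * 'rV[R]_n) * R => (1 - q.2) *: q.1.1 + q.2 *: q.1.2).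
Proof.
move=> q.
have c1 : continuous (fun q : ('rV[R]_n * 'rV[R]_n) * R => q.1.1).
  move=> x; apply: (@cvg_comp _ _ _ fst fst _ _ _ cvg_fst cvg_fst).
have c2 : continuous (fun q : ('rV[R]_n * 'rV[R]_n) * R => q.1.2).
  move=> x; apply: (@cvg_comp _ _ _ fst snd _ _ _ cvg_fst cvg_snd).
have c3 : continuous (fun q : ('rV[R]_n * 'rV[R]_n) * R => q.2).
  by move=> x; apply: cvg_snd.
apply: cvgD; apply: cvgZ.
- by apply: cvgB; [exact: cvg_cst | exact: c3].
- exact: c1.
- exact: c3.
- exact: c2.
Qed.


Section HLsec.
Variables (R : realType) (n : nat) (B : 'rV[R]_n -> 'rV[R]_n -> R).
Hypothesis hB : inner_product B.

Definition NB p := Num.sqrt (B p p).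

Lemma NB_ge0 p : 0 <= NB p.
Proof. exact: sqrtr_ge0. Qed.

Lemma NB_sq p : NB p ^+ 2 = B p p.
Proof. by rewrite sqr_sqrtr // (ip_ge0 hB). Qed.

Lemma NB0 : NB 0 = 0.
Proof. by rewrite /NB (ip0l hB) sqrtr0. Qed.

Lemma NB_eq0 p : NB p = 0 -> p = 0.
Proof. by move=> h; apply: (ip_eq0 hB); rewrite -NB_sq h expr0n. Qed.

Lemma NBZ a p : NB (a *: p) = `|a| * NB p.
Proof.
rewrite /NB (ipZl hB) (ipZr hB) mulrA -expr2 sqrtrM ?sqr_ge0 //.
by rewrite sqrtr_sqr.
Qed.

Lemma B_le_NB p q : B p q <= NB p * NB q.
Proof.
apply: (le_trans (ler_norm _)).
rewrite -sqrtr_sqr /NB -sqrtrM ?(ip_ge0 hB) //.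
by apply: ler_wsqrtr; apply: (ip_CS hB).
Qed.

Lemma NB_tri p q : NB (p + q) <= NB p + NB q.
Proof.
rewrite {1}/NB -[NB p + NB q]ger0_norm ?addr_ge0 ?NB_ge0 // -sqrtr_sqr.
apply: ler_wsqrtr; rewrite (ip_sqD hB) sqrrD !NB_sq.
have := B_le_NB p q; lra.
Qed.

Lemma NBN p : NB (- p) = NB p.
Proof. by rewrite -scaleN1r NBZ normrN normr1 mul1r. Qed.

Lemma NB_dist p q : `|NB p - NB q| <= NB (p - q).
Proof.
rewrite ler_norml; apply/andP; split.
  have e : NB (q - p) = NB (p - q) by rewrite -NBN opprB.
  have := NB_tri (q - p) p; rewrite subrK; lra.
have := NB_tri (p - q) q; rewrite subrK; lra.
Qed.

Lemma NB_sum m (F : 'I_m -> 'rV[R]_n) : NB (\sum_i F i) <= \sum_i NB (F i).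
Proof.
elim/big_rec2: _ => [|i y1 y2 _ h]; first by rewrite NB0.
by apply: (le_trans (NB_tri _ _)); rewrite lerD2l.
Qed.

Lemma NB_up : exists2 C, 0 <= C & forall p, NB p <= C * `|p|.
Proof.
exists (\sum_j NB (delta_mx 0 j)); first by apply: sumr_ge0 => j _; exact: NB_ge0.
move=> p; rewrite {1}(row_delta p) mulr_suml.
apply: (le_trans (NB_sum _)); apply: ler_sum => j _.
rewrite NBZ [X in X <= _]mulrC; apply: ler_wpM2l; [exact: NB_ge0 | exact: entry_le].
Qed.

Lemma NB_cont : continuous NB.
Proof.
have [C C0 hC] := NB_up.
apply: (@lip_cont _ _ _ _ C) => x y.
apply: (le_trans (NB_dist _ _)); exact: hC.
Qed.

Lemma NB_low : exists2 c, 0 < c & forall p, c * `|p| <= NB p.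
Proof.
set Sp := [set p : 'rV[R]_n | `|p| = 1].
have hnz p : p != 0 -> Sp (`|p|^-1 *: p).
  move=> pn0; rewrite /Sp /= normrZ normfV normr_id mulVf //.
  by rewrite normr_eq0.
case: (pselect (Sp !=set0)) => [[p0 Sp0]|nS]; last first.
  exists 1 => // p; have [->|pn0] := eqVneq p 0; first by rewrite normr0 mulr0 NB_ge0.
  by exfalso; apply: nS; exists (`|p|^-1 *: p); apply: hnz.
have cS : compact Sp.
  apply: bounded_closed_compact.
    by apply: (@bnd_set _ _ _ 1) => p ->.
  have -> : Sp = (fun p : 'rV[R]_n => `|p|) @^-1` [set x | x = 1] by [].
  apply: preimage_closed; last exact: closed_eq.
  by move=> x _; apply: norm_continuous.
have cI : compact (NB @` Sp).
  by apply: continuous_compact => //; apply: continuous_subspaceT; exact: NB_cont.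
have ne : (NB @` Sp) !=set0 by exists (NB p0), p0.
have pos x : (NB @` Sp) x -> 0 <= x by move=> [p _ <-]; exact: NB_ge0.
have [_ [p1 Sp1 <-] hmin] := min_compact cI ne pos.
exists (NB p1).
  rewrite lt_neqAle NB_ge0 andbT eq_sym; apply/eqP => /NB_eq0 p10.
  by move: Sp1; rewrite /Sp /= p10 normr0 => /eqP; rewrite eq_sym oner_eq0.
move=> p; have [->|pn0] := eqVneq p 0; first by rewrite normr0 mulr0 NB_ge0.
have := hmin _ (ex_intro2 _ _ _ (hnz _ pn0) erefl).
rewrite NBZ normfV normr_id => h.
have pp : 0 < `|p| by rewrite normr_gt0.
by rewrite -ler_pdivlMr // mulrC.
Qed.

End HLsec.

Definition snoc (T : Type) m (f : 'I_m -> T) (x : T) : 'I_m.+1 -> T :=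
  fun i => if unlift ord_max i is Some k then f k else x.

Lemma snoc_widen (T : Type) m (f : 'I_m -> T) x i : snoc f x (widen_ord (leqnSn m) i) = f i.
Proof.
have -> : widen_ord (leqnSn m) i = lift ord_max i by apply: val_inj; rewrite /= /bump leqNgt ltn_ord.
by rewrite /snoc liftK.
Qed.

Lemma snoc_max (T : Type) m (f : 'I_m -> T) x : snoc f x ord_max = x.
Proof. by rewrite /snoc unlift_none. Qed.

Section Conv.
Variables (R : realType) (n : nat) (T : set 'rV[R]_n).

Definition convn m p := exists (l : 'I_m -> R) (z : 'I_m -> 'rV[R]_n),
  [/\ (forall i, 0 <= l i), \sum_i l i = 1, (forall i, T (z i)) & p = \sum_i l i *: z i].

Fixpoint Kset j : set 'rV[R]_n :=
  if j is j'.+1 then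
    [set (1 - q.2) *: q.1.1 + q.2 *: q.1.2 | q in (Kset j' `*` T) `*` `[(0:R), 1]]
  else T.

Lemma Kset_T j x : T x -> Kset j x.
Proof.
move=> Tx; elim: j => [|j IH] //=.
exists ((x, x), 0); last by rewrite subr0 scale1r scale0r addr0.
split; first by split.
by rewrite /= in_itv /= lexx ler01.
Qed.

Lemma Kset_convn j p : Kset j p -> convn j.+1 p.
Proof.
elim: j p => [|j IH] p /=.
  move=> Tp; exists (fun _ => 1), (fun _ => p); split => //.
  - by rewrite big_ord1.
  - by rewrite big_ord1 scale1r.
move=> [[[a b] s] [[/= Ka Tb] /=]]; rewrite in_itv /= => /andP [s0 s1] <-.
have [l [z [l0 l1 Tz ->]]] := IH _ Ka.
exists (snoc (fun k => (1 - s) * l k) s), (snoc z b); split.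
- move=> i; rewrite /snoc; case: unlift => [k|] //.
  by rewrite mulr_ge0 // subr_ge0.
- by rewrite big_ord_recr /= snoc_max; under eq_bigr do rewrite snoc_widen;
    rewrite -mulr_sumr l1 mulr1 subrK.
- by move=> i; rewrite /snoc; case: unlift.
- rewrite [RHS]big_ord_recr /= !snoc_max; under [X in _ = X + _]eq_bigr do rewrite !snoc_widen.
  by rewrite scaler_sumr; congr (_ + _); apply: eq_bigr => i _; rewrite scalerA.
Qed.

Lemma convn_Kset j p : convn j.+1 p -> Kset j p.
Proof.
elim: j p => [|j IH] p.
  move=> [l [z [l0 l1 Tz ->]]]; move: l1; rewrite !big_ord1 => ->.
  by rewrite scale1r.
move=> [l [z [l0 l1 Tz ->]]].
move: l1; rewrite big_ord_recr /= => l1.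
set s := l ord_max in l1 *.
set S0 := \sum_(i < j.+1) l (widen_ord (leqnSn j.+1) i) in l1.
have S0ge : 0 <= S0 by apply: sumr_ge0 => i _; exact: l0.
have s0 : 0 <= s by exact: l0.
rewrite big_ord_recr /=.
have [s1|sn1] := eqVneq s 1.
  have S00 : S0 = 0 by rewrite s1 in l1; lra.
  have li0 i : l (widen_ord (leqnSn j.+1) i) = 0.
    exact: (psumr_eq0P (fun i _ => l0 _) S00).
  rewrite big1 ?add0r; last by move=> i _; rewrite li0 scale0r.
  exists ((z ord_max, z ord_max), 1).
    split; first by split => //=; apply: Kset_T.
    by rewrite /= in_itv /= ler01 lexx.
  by rewrite /= subrr scale0r add0r -/s s1.
have Sp : 0 < S0 by rewrite lt_neqAle S0ge andbT; apply/eqP => S00; move/eqP: sn1; apply; lra.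
pose a := \sum_(i < j.+1) (l (widen_ord (leqnSn j.+1) i) / S0) *: z (widen_ord (leqnSn j.+1) i).
have Ka : Kset j a.
  apply: IH; exists (fun i => l (widen_ord (leqnSn j.+1) i) / S0),
    (fun i => z (widen_ord (leqnSn j.+1) i)); split => //.
  - by move=> i; rewrite divr_ge0 // ltW.
  - by rewrite -mulr_suml -/S0 divff // gt_eqF.
exists ((a, z ord_max), s).
  split; first by split => //=; exact: Tz.
  rewrite /= in_itv /= s0 /=; lra.
rewrite /= /a scaler_sumr; congr (_ + _); apply: eq_bigr => i _.
rewrite scalerA; congr (_ *: _).
have -> : 1 - s = S0 by lra.
by rewrite mulrC -mulrA mulVf ?gt_eqF // mulr1.
Qed.

End Conv.

Section Carath.
Variables (R : realType) (n : nat) (T : set 'rV[R]_n).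

Lemma carath p : convn T n.+2 p -> convn T n.+1 p.
Proof.
move=> [l [z [l0 l1 Tz ->]]].
pose D : 'M[R]_(n.+1, n) := \matrix_(i < n.+1) (z (widen_ord (leqnSn n.+1) i) - z ord_max).
have nrf : ~~ row_free D.
  rewrite /row_free; apply/negP => /eqP h; have := rank_leq_col D; rewrite h ltnn.
  done.
have kn0 : kermx D != 0 by rewrite kermx_eq0.
have [k hk] : exists k, row k (kermx D) != 0.
  case: (pselect (exists k, row k (kermx D) != 0)) => // nk; exfalso.
  move/eqP: kn0; apply; apply/row_matrixP => k; rewrite row0.
  by apply/eqP; apply/negPn/negP => h; apply: nk; exists k.
set c := row k (kermx D) in hk.
have cD : c *m D = 0 by rewrite /c -row_mul mulmx_ker row0.
have cD' : \sum_i c 0 i *: (z (widen_ord (leqnSn n.+1) i) - z ord_max) = 0.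
  by apply: etrans cD; rewrite mulmx_sum_row; apply: eq_bigr => i _; rewrite rowK.
pose mu := snoc (fun i => c 0 i) (- \sum_i c 0 i).
have musum : \sum_i mu i = 0.
  rewrite big_ord_recr /= /mu snoc_max; under eq_bigr do rewrite snoc_widen.
  by rewrite subrr.
have muz : \sum_i mu i *: z i = 0.
  rewrite big_ord_recr /= /mu snoc_max; under eq_bigr do rewrite snoc_widen.
  apply: etrans _ cD'; under [RHS]eq_bigr do rewrite scalerBr.
  by rewrite sumrB scaleNr scaler_suml.
have [i1 hi1] : exists i, 0 < mu i.
  case: (pselect (exists i, 0 < mu i)) => // nmu; exfalso.
  have mule i : mu i <= 0 by rewrite leNgt; apply/negP => h; apply: nmu; exists i.
  have s0 : \sum_i - mu i = 0 by rewrite sumrN musum oppr0.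
  have mu0 i : mu i = 0.
    have h := psumr_eq0P (fun j _ => eqbRL (oppr_ge0 (mu j)) (mule j)) s0 (i := i) isT.
    by rewrite -[mu i]opprK h oppr0.
  move/eqP: hk; apply; apply/rowP => j.
  by have := mu0 (widen_ord (leqnSn n.+1) j); rewrite /mu snoc_widen /c => ->; rewrite mxE.
have [i0 mu0 hmin] : exists2 i0, 0 < mu i0 & forall j, 0 < mu j -> l i0 / mu i0 <= l j / mu j.
  case: (@arg_minP _ _ _ i1 (fun i => 0 < mu i) (fun i => l i / mu i) hi1) => i hi h.
  by exists i.
set th := l i0 / mu i0.
have th0 : 0 <= th by rewrite /th divr_ge0 // ltW.
pose l' i := l i - th * mu i.
have l'0 i : 0 <= l' i.
  rewrite /l' subr_ge0; have [mp|mn] := ltP 0 (mu i).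
    by rewrite -ler_pdivlMr //; apply: hmin.
  by apply: le_trans (l0 i); rewrite mulr_ge0_le0.
have l'i0 : l' i0 = 0 by rewrite /l' /th divfK ?subrr // gt_eqF.
have l'1 : \sum_i l' i = 1.
  by rewrite /l' sumrB -mulr_sumr musum mulr0 subr0 l1.
have l'z : \sum_i l' i *: z i = \sum_i l i *: z i.
  rewrite /l'; under eq_bigr do rewrite scalerBl -scalerA.
  by rewrite sumrB -scaler_sumr muz scaler0 subr0.
exists (fun i => l' (lift i0 i)), (fun i => z (lift i0 i)); split.
- by move=> i; exact: l'0.
- by move: l'1; rewrite (bigD1_ord i0) //= l'i0 add0r.
- by move=> i; exact: Tz.
- by rewrite -l'z (bigD1_ord i0) //= l'i0 scale0r add0r.
Qed.


End Carath.

Section HLmain.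
Variables (R : realType) (n : nat) (B : 'rV[R]_n -> 'rV[R]_n -> R).
Hypothesis hB : inner_product B.

Lemma HL (tau' : 'rV[R]_n -> 'rV[R]_n) (c0 v : 'rV[R]_n) :
  (forall p q, B (tau' p - tau' q) (tau' p - tau' q) <= B (p - q) (p - q)) ->
  (forall p, B (tau' p) (tau' p) = B p p) ->
  (forall w, exists2 y, tau' y = tau' c0 & B v w <= B y w) ->
  convn [set p | tau' p = tau' c0] n.+1 v.
Proof.
move=> hne hnorm hsup.
set T := [set p | tau' p = tau' c0].
have [C C0 hC] := NB_up hB.
have [c cp hc] := NB_low hB.
have NBle p q : NB B (tau' p - tau' q) <= NB B (p - q) by apply: ler_wsqrtr.
have tcont : continuous tau'.
  apply: (@lip_cont _ _ _ _ (C / c)) => p q.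
  rewrite mulrAC ler_pdivlMr // mulrC.
  apply: le_trans (hc _) _; apply: le_trans (NBle p q) _; exact: hC.
have Tcl : closed T.
  have -> : T = tau' @^-1` [set tau' c0] by [].
  apply: preimage_closed; first by move=> x _; apply: tcont.
  by apply: accessible_closed_set1; apply: hausdorff_accessible; exact: norm_hausdorff.
have Tb : bounded_set T.
  apply: (@bnd_set _ _ _ (NB B (tau' c0) / c)) => p Tp.
  rewrite ler_pdivlMr // mulrC; apply: le_trans (hc p) _.
  by rewrite /NB -hnorm Tp.
have Tc : compact T by apply: bounded_closed_compact.
have Kc j : compact (Kset T j).
  elim: j => [|j IH] //=.
  apply: continuous_compact; first by apply: continuous_subspaceT; exact: phi_cont.
  apply: compact_setX; first exact: compact_setX.
  exact: segment_compact.
have Tc0 : T c0 by [].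
pose G q := NB B (v - q).
have Gc : continuous G.
  apply: (@lip_cont _ _ _ _ C) => p q; rewrite /G.
  apply: le_trans (NB_dist hB _ _) _.
  have -> : v - p - (v - q) = - (p - q).
    by rewrite opprD opprK addrACA subrr add0r opprB addrC.
  by rewrite NBN //; exact: hC.
have ne : (G @` Kset T n) !=set0 by exists (G c0), c0 => //; apply: Kset_T.
have pos x : (G @` Kset T n) x -> 0 <= x by move=> [q _ <-]; exact: NB_ge0.
have [_ [q0 Kq0 <-] hmin] :=
  min_compact (continuous_compact (continuous_subspaceT Gc) (Kc n)) ne pos.
suff -> : v = q0 by apply: Kset_convn.
apply/eqP; rewrite -subr_eq0; apply/negPn/negP => wn0.
set w := v - q0 in wn0.
have [y Ty hy] := hsup w.
set d := y - q0.
have Bww : 0 < B w w.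
  rewrite lt_neqAle (ip_ge0 hB) andbT eq_sym; apply/eqP => /(ip_eq0 hB) /eqP.
  by rewrite (negbTE wn0).
have Bwd : B w w <= B w d.
  have e1 : B w w = B v w - B q0 w by rewrite {1}/w (ipBl hB).
  have e2 : B w d = B y w - B q0 w by rewrite (ipC hB) /d (ipBl hB).
  lra.
have Bdd : 0 < B d d.
  rewrite lt_neqAle (ip_ge0 hB) andbT eq_sym; apply/eqP => /(ip_eq0 hB) d0.
  by move: Bwd; rewrite d0 (ip0r hB); lra.
set e := Num.min 1 (B w d / B d d).
have e0 : 0 < e by rewrite lt_min ltr01 /= divr_gt0 //; lra.
have e1 : e <= 1 by rewrite ge_min lexx.
have ed : e * B d d <= B w d.
  by rewrite -ler_pdivlMr // ge_min lexx orbT.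
set q1 := q0 + e *: d.
have Kq1 : Kset T n q1.
  apply: convn_Kset; apply: carath; apply: (@Kset_convn _ _ _ n.+1).
  exists ((q0, y), e).
    by split; [split | rewrite /= in_itv /= (ltW e0) e1].
  rewrite /= /q1 /d scalerBl scale1r scalerBr -addrA [- (e *: q0) + _]addrC.
  done.
have := hmin (G q1) (ex_intro2 _ _ q1 Kq1 erefl).
apply/negP; rewrite -ltNge /G /NB ltr_sqrt //.
have -> : v - q1 = w - e *: d by rewrite /q1 opprD addrA.
rewrite (ip_sqB hB) (ipZr hB) (ipZl hB) (ipZr hB).
have : e * (e * B d d) <= e * B w d by rewrite ler_wpM2l // ltW.
nra.
Qed.

End HLmain.



Lemma iso_ip (R : realType) (V W : lmodType R) (ipV : V -> V -> R) (ipW : W -> W -> R)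
  (hV : inner_product ipV) (hW : inner_product ipW) (f : V -> W)
  (flin : forall a x y, f (a *: x + y) = a *: f x + f y)
  (fn : forall x, ipnorm ipW (f x) = ipnorm ipV x) x y :
  ipW (f x) (f y) = ipV x y.
Proof.
have sq z : ipW (f z) (f z) = ipV z z.
  have := fn z; rewrite /ipnorm => /eqP; rewrite eqr_sqrt ?ip_ge0 //.
  by move/eqP.
have fD u v : f (u + v) = f u + f v by rewrite -[u]scale1r flin !scale1r.
have := sq (x + y); rewrite fD (ip_sqD hW) (ip_sqD hV) !sq => h.
have : 2 * ipW (f x) (f y) = 2 * ipV x y by lra.
lra.
Qed.


Lemma convE (R : realType) (E : lmodType R) (x y : convex_lmodType E) (l : {i01 R}) :
  x <| l |> y = l%:num *: (x : E) + (1 - l%:num) *: (y : E).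
Proof. by []. Qed.

Lemma ip_suml (R : realType) (V : lmodType R) (ip : V -> V -> R) (hip : inner_product ip)
  m (F : 'I_m -> V) z : ip (\sum_i F i) z = \sum_i ip (F i) z.
Proof.
elim/big_rec2: _ => [|i y1 y2 _ <-]; first exact: ip0l.
exact: ipDl.
Qed.

Lemma conv_fin (R : realType) (E : lmodType R) (C : set (convex_lmodType E)) (x0 : E) :
  convex_set C -> C x0 -> forall m (l : 'I_m -> R) (z : 'I_m -> E),
  (forall i, 0 <= l i) -> \sum_i l i = 1 -> (forall i, l i != 0 -> C (z i)) ->
  C (\sum_i l i *: z i).
Proof.
move=> cC Cx0; elim=> [|m IH] l z l0 l1 lz.
  by move: l1; rewrite big_ord0 => /eqP; rewrite eq_sym oner_eq0.
rewrite big_ord_recr /=; move: l1; rewrite big_ord_recr /= => l1.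
set a := l ord_max in l1 *.
set s := \sum_(i < m) l (widen_ord (leqnSn m) i) in l1.
have s0 : 0 <= s by apply: sumr_ge0 => i _; exact: l0.
have a0 : 0 <= a by exact: l0.
have [a1|an1] := eqVneq a 1.
  have s00 : s = 0 by lra.
  have li0 i : l (widen_ord (leqnSn m) i) = 0.
    by apply: (psumr_eq0P (fun i _ => l0 _) s00).
  rewrite big1 ?add0r; last by move=> i _; rewrite li0 scale0r.
  by rewrite a1 scale1r; apply: lz; rewrite -/a a1 oner_eq0.
have [az|anz] := eqVneq a 0.
  rewrite az scale0r addr0.
  apply: (IH (fun i => l (widen_ord (leqnSn m) i))) => //; first by move: l1; rewrite /s az addr0.
  by move=> i; apply: lz.
have sp : 0 < s by lra.
pose l' := fun i : 'I_m => l (widen_ord (leqnSn m) i) / s.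
have Cw : C (\sum_i l' i *: z (widen_ord (leqnSn m) i)).
  apply: IH.
  - by move=> i; rewrite /l' divr_ge0.
  - by rewrite /l' -mulr_suml -/s divff // gt_eqF.
  - move=> i; rewrite /l' mulf_eq0 invr_eq0 negb_or => /andP [hi _]; exact: lz.
have a1' : a <= 1 by lra.
have := cC (z ord_max) (\sum_i l' i *: z (widen_ord (leqnSn m) i)) (Itv01 a0 a1'); rewrite !in_setE => /(_ _ Cw).
have -> : (z ord_max : convex_lmodType E) <| Itv01 a0 a1' |>
   (\sum_i l' i *: z (widen_ord (leqnSn m) i)) =
   \sum_(i < m) l (widen_ord (leqnSn m) i) *: z (widen_ord (leqnSn m) i) + a *: z ord_max.
  rewrite convE /= addrC; congr (_ + _).
  have -> : 1 - a = s by lra.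
  rewrite scaler_sumr; apply: eq_bigr => i _; rewrite scalerA /l' mulrC -mulrA.
  by rewrite mulVf ?gt_eqF // mulr1.
by apply; apply: lz.
Qed.

Section SDS.
Variables (R : realType) (H X : vectType R) (ipH : H -> H -> R) (ipX : X -> X -> R)
  (S : Type) (mul : S -> S -> S) (one : S) (inv : S -> S) (act : S -> X -> X)
  (gamma : H -> X) (A : Type) (Lambda : A -> {linear X -> H}) (tau : X -> X).
Hypotheses (hH : inner_product ipH) (hX : inner_product ipX).
Hypotheses (mulA : forall a b c, mul a (mul b c) = mul (mul a b) c)
  (mul1 : forall a, mul one a = a /\ mul a one = a)
  (mulV : forall a, mul (inv a) a = one /\ mul a (inv a) = one)
  (act1 : forall x, act one x = x)
  (actM : forall s t x, act (mul s t) x = act s (act t x))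
  (actL : forall s a x y, act s (a *: x + y) = a *: act s x + act s y)
  (actN : forall s x, ipnorm ipX (act s x) = ipnorm ipX x).
Hypotheses (hLn : forall a x, ipnorm ipH (Lambda a x) = ipnorm ipX x)
  (tinv : S_invariant act tau) (torb : forall x, Defs.orbit act x (tau x))
  (tgam : forall a x, gamma (Lambda a x) = tau x)
  (hC : forall Z : H, exists a, Z = Lambda a (gamma Z))
  (hD : forall Z W : H, ipH Z W <= ipX (gamma Z) (gamma W)).

Lemma Lip a x y : ipH (Lambda a x) (Lambda a y) = ipX x y.
Proof. by apply: (iso_ip hX hH) => // b u v; rewrite linearP. Qed.

Lemma actip s x y : ipX (act s x) (act s y) = ipX x y.
Proof. exact: (iso_ip hX hX). Qed.

Lemma actK s x : act (inv s) (act s x) = x.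
Proof. by rewrite -actM (mulV s).1 act1. Qed.

Lemma tau_act x : exists s, tau x = act s x.
Proof. by have [s _ h] := torb x; exists s. Qed.

Lemma tau_gamma W : tau (gamma W) = gamma W.
Proof. by have [a ha] := hC W; rewrite -(tgam a) -ha. Qed.

Lemma tauD u v : ipX u v <= ipX (tau u) (tau v).
Proof.
have [a _] := hC 0.
by rewrite -(Lip a) -!(tgam a); apply: hD.
Qed.

Lemma gam_n Z : ipX (gamma Z) (gamma Z) = ipH Z Z.
Proof. by have [a ha] := hC Z; rewrite [in RHS]ha Lip. Qed.

Lemma tau_n x : ipX (tau x) (tau x) = ipX x x.
Proof. by have [s ->] := tau_act x; rewrite actip. Qed.

Lemma tau_tau x : tau (tau x) = tau x.
Proof. by have [s hs] := tau_act x; rewrite {1}hs tinv. Qed.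

Lemma simul Z Y : ipH Z Y = ipX (gamma Z) (gamma Y) ->
  exists a, Z = Lambda a (gamma Z) /\ Y = Lambda a (gamma Y).
Proof.
move=> hZY.
have [c hc] := hC (Z + Y).
set U := Lambda c (gamma Z); set V := Lambda c (gamma Y).
have hUV : Z + Y = U + V.
  apply/eqP; rewrite -subr_eq0; apply/eqP; apply: (ip_le0 hH).
  rewrite (ip_sqB hH).
  have e1 : ipH (U + V) (U + V) = ipH (Z + Y) (Z + Y).
    rewrite /U /V -linearD Lip.
    rewrite (ip_sqD hX) (ip_sqD hH) !gam_n hZY //.
  have e2 : ipH (Z + Y) (U + V) = ipX (gamma (Z + Y)) (gamma Z + gamma Y).
    by rewrite {1}hc /U /V -linearD Lip.
  have e3 := hD (Z + Y) Z; have e4 := hD (Z + Y) Y.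
  rewrite (ipDr hX) in e2; rewrite (ipDr hH) in e2 *.
  have e5 : ipH (Z + Y) (Z + Y) = ipH (Z + Y) Z + ipH (Z + Y) Y by rewrite (ipDr hH).
  lra.
have hD' : Z - U = V - Y.
  by apply/eqP; rewrite subr_eq addrAC eq_sym subr_eq hUV addrC.
have k : ipH (Z - U) (Z - U) <= 0.
  rewrite {2}hD' (ipBl hH) !(ipBr hH).
  have h1 : ipH Z V <= ipX (gamma Z) (gamma Y).
    by have := hD Z V; rewrite /V tgam tau_gamma.
  have h2 : ipH U Y <= ipX (gamma Z) (gamma Y).
    by have := hD U Y; rewrite /U tgam tau_gamma.
  have h3 : ipH U V = ipX (gamma Z) (gamma Y) by rewrite /U /V Lip.
  lra.
have eZ : Z = U by apply/eqP; rewrite -subr_eq0; apply/eqP; apply: (ip_le0 hH).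
exists c; split => //.
by move: hD'; rewrite -eZ subrr => /eqP; rewrite eq_sym subr_eq0 => /eqP.
Qed.


Lemma majorize u x : (forall w, ipX u w <= ipX x (tau w)) ->
  exists m (l : 'I_m -> R) (s : 'I_m -> S),
  [/\ (forall i, 0 <= l i), \sum_i l i = 1 & u = \sum_i l i *: act (s i) x].
Proof.
move=> hu.
pose B := fun p q => ipX (r2v p) (r2v q).
have hB : inner_product B.
  split.
  - by move=> p q; rewrite /B (ipC hX).
  - by move=> a p q z; rewrite /B linearP (ipAl hX).
  - by move=> p; apply: (ip_ge0 hX).
  - by move=> p h; have := ip_eq0 hX h; move/(congr1 v2r); rewrite r2vK linear0.
pose tau' := fun p => v2r (tau (r2v p)).
have := @HL _ _ B hB tau' (v2r x) (v2r u).
case.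
- move=> p q; rewrite /B /tau' -!linearB /= !v2rK.
  rewrite linearB (ip_sqB hX) (ip_sqB hX) !tau_n.
  have := tauD (r2v p) (r2v q); lra.
- by move=> p; rewrite /B /tau' v2rK tau_n.
- move=> w; have [s hs] := tau_act (r2v w).
  exists (v2r (act (inv s) x)); first by rewrite /tau' !v2rK tinv.
  rewrite /B !v2rK; apply: le_trans (hu _) _.
  by rewrite hs -(actip (inv s)) actK.
move=> l [z [l0 l1 Tz hv]].
have hs i : exists s, r2v (z i) = act s x.
  have e : tau (r2v (z i)) = tau x.
    by apply: v2r_inj; have := Tz i; rewrite /tau' /= v2rK.
  have [a ha] := tau_act (r2v (z i)); have [b hb] := tau_act x.
  exists (mul (inv a) b).
  by rewrite actM -hb -e ha actK.
have [s hsP] := choice hs.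
eexists; exists l, s; split => //.
rewrite -[u]v2rK hv linear_sum; apply: eq_bigr => i _.
by rewrite linearZ /= hsP.
Qed.

Section Phi.
Variables (phi : X -> \bar R) (Y : H).
Hypotheses (phinf : forall x, phi x != -oo%E) (phiinv : S_invariant act phi).

Let f := fun Z : H => (phi (gamma Z) - (ipH Z Y)%:E)%E.
Let g := fun x : X => (phi x - (ipX x (gamma Y))%:E)%E.

Lemma phi_tau x : phi (tau x) = phi x.
Proof. by have [s ->] := tau_act x; rewrite phiinv. Qed.

Lemma fLam b x : Y = Lambda b (gamma Y) -> f (Lambda b x) = g x.
Proof.
move=> hb; rewrite /f /g tgam phi_tau.
by have -> : ipH (Lambda b x) Y = ipX x (gamma Y) by rewrite {1}hb Lip.
Qed.

Lemma f_ge Z : (g (gamma Z) <= f Z)%E.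
Proof. by rewrite /f /g; apply: leeB => //; rewrite lee_fin. Qed.

Lemma infeq : ereal_inf (range f) = ereal_inf (range g).
Proof.
apply/eqP; rewrite eq_le; apply/andP; split.
  have [b0 hb0] := hC Y.
  apply: le_ereal_inf_tmp => _ [x _ <-].
  rewrite -(fLam x hb0); apply: ereal_inf_lbound; by exists (Lambda b0 x).
apply: le_ereal_inf_tmp => _ [Z _ <-].
apply: le_trans (f_ge Z); apply: ereal_inf_lbound; by exists (gamma Z).
Qed.

Lemma ArgminE (T : Type) (h : T -> \bar R) z :
  Argmin h z <-> (ereal_inf (range h) < +oo)%E /\ h z = ereal_inf (range h).
Proof. by rewrite /Argmin; case: ifP => //= _; split => // -[]. Qed.

Lemma part3 x b : Y = Lambda b (gamma Y) -> (Argmin f (Lambda b x) <-> Argmin g x).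
Proof.
move=> hb; split => /ArgminE [h1 h2]; apply/ArgminE.
  by rewrite -infeq -(fLam _ hb).
by rewrite infeq (fLam _ hb).
Qed.

Lemma MM_ip Z : Argmin f Z ->
  Argmin g (gamma Z) /\ ipH Z Y = ipX (gamma Z) (gamma Y).
Proof.
move=> /ArgminE [hlt hZ].
have e : g (gamma Z) = f Z.
  apply/eqP; rewrite eq_le f_ge /= hZ infeq.
  apply: ereal_inf_lbound; by exists (gamma Z).
split; first by apply/ArgminE; split; rewrite -infeq // e hZ.
move: e hZ hlt; rewrite /f /g.
case E: (phi (gamma Z)) => [p| |] //=.
- by move=> /eqP; rewrite eqe => /eqP h _ _; lra.
- by move=> _ <-.
- by have := phinf (gamma Z); rewrite E.
Qed.

Lemma part2 Z : Argmin f Z <->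
  (Argmin g (gamma Z) /\ exists a, Z = Lambda a (gamma Z) /\ Y = Lambda a (gamma Y)).
Proof.
split.
  move=> /MM_ip [hM hip]; split => //; exact: simul.
move=> [hM [a [ha hb]]]; rewrite ha; exact/(part3 _ hb).
Qed.


Lemma actZD s a x y : act s (a *: x + y) = a *: act s x + act s y.
Proof. exact: actL. Qed.

Lemma act0 s : act s 0 = 0.
Proof.
have := actL s 1 0 0; rewrite scaler0 addr0 scale1r => h.
by apply: (@addrI _ (act s 0)); rewrite addr0 -h.
Qed.

Lemma actZ s a x : act s (a *: x) = a *: act s x.
Proof. by rewrite -[a *: x]addr0 actL act0 addr0. Qed.

Lemma actD s x y : act s (x + y) = act s x + act s y.
Proof. by rewrite -[x]scale1r actL !scale1r. Qed.

Lemma Lam_inj b x y : Lambda b x = Lambda b y -> x = y.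
Proof.
move=> e; apply/eqP; rewrite -subr_eq0; apply/eqP; apply: (ip_eq0 hX).
by rewrite -(Lip b) linearB /= e subrr (ip0l hH).
Qed.

Lemma part4 : Argmin f = [set Z | exists x b, [/\ Argmin g x, A_of gamma Lambda Y b & Z = Lambda b x]].
Proof.
apply/seteqP; split => Z.
  move=> /part2 [hM [a [ha hb]]]; exists (gamma Z), a; split => //.
move=> [x [b [hx hb ->]]]; exact/(part3 _ hb).
Qed.

Lemma part5b : convex_set (Argmin f : set (convex_lmodType H)) ->
  convex_set (Argmin g : set (convex_lmodType X)).
Proof.
move=> cMM x1 x2 l; rewrite !in_setE => h1 h2.
have [b hb] := hC Y.
have := cMM (Lambda b x1) (Lambda b x2) l; rewrite !in_setE.
have e : (Lambda b x1 : convex_lmodType H) <| l |> Lambda b x2 = Lambda b (x1 <| l |> x2).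
  by rewrite !convE linearD !linearZ.
rewrite e => /(_ (proj2 (part3 _ hb) h1) (proj2 (part3 _ hb) h2)).
by move/(part3 _ hb).
Qed.

Lemma part5f : convex_set (Argmin g : set (convex_lmodType X)) ->
  convex_set (Argmin f : set (convex_lmodType H)).
Proof.
move=> cM Z1 Z2 l; rewrite !in_setE => h1 h2.
have l0 : 0 <= l%:num by apply: ge0.
have l1 : l%:num <= 1 by apply: le1.
have l1' : 0 <= 1 - l%:num by rewrite subr_ge0.
set Z := (Z1 : convex_lmodType H) <| l |> Z2.
have hZ : (Z : H) = l%:num *: Z1 + (1 - l%:num) *: Z2 by [].
have [M1 ip1] := MM_ip h1; have [M2 ip2] := MM_ip h2.
set x1 := gamma Z1 in M1 ip1 *; set x2 := gamma Z2 in M2 ip2 *.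
set x := l%:num *: x1 + (1 - l%:num) *: x2.
have Mx : Argmin g x.
  by have := cM x1 x2 l; rewrite !in_setE; apply.
have [c hc] := hC Z.
have sup w : ipX (gamma Z) w <= ipX x (tau w).
  rewrite -(Lip c) -hc hZ (ipDl hH) !(ipZl hH) /x (ipDl hX) !(ipZl hX).
  have := hD Z1 (Lambda c w); have := hD Z2 (Lambda c w); rewrite !tgam -/x1 -/x2.
  by move=> e2 e1; apply: lerD; apply: ler_wpM2l.
have [m [lam [s [lam0 lam1 hu]]]] := majorize sup.
have tx1 : tau x1 = x1 by apply: tau_gamma.
have tx2 : tau x2 = x2 by apply: tau_gamma.
have orbb t w : ipX (act t x) w <= ipX x (tau w).
  rewrite /x actD !actZ (ipDl hX) !(ipZl hX) (ipDl hX) !(ipZl hX).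
  have e1 := tauD (act t x1) w; have e2 := tauD (act t x2) w.
  rewrite !tinv tx1 tx2 in e1 e2.
  by apply: lerD; apply: ler_wpM2l.
have a3 : ipH Z Y = ipX x (gamma Y).
  by rewrite hZ (ipDl hH) !(ipZl hH) ip1 ip2 /x (ipDl hX) !(ipZl hX).
have a1 := hD Z Y.
have a2 := sup (gamma Y); rewrite tau_gamma in a2.
have eqY : ipH Z Y = ipX (gamma Z) (gamma Y) by lra.
have xY : ipX (gamma Z) (gamma Y) = ipX x (gamma Y) by lra.
have Mu : Argmin g (gamma Z).
  rewrite hu; apply: (conv_fin cM Mx) => // i li.
  pose d j := lam j * (ipX x (gamma Y) - ipX (act (s j) x) (gamma Y)).
  have d0 j : 0 <= d j.
    by rewrite /d mulr_ge0 // subr_ge0; have := orbb (s j) (gamma Y); rewrite tau_gamma.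
  have dsum : \sum_i d i = 0.
    rewrite /d; under eq_bigr do rewrite mulrBr.
    rewrite sumrB -mulr_suml lam1 mul1r.
    have -> : \sum_i lam i * ipX (act (s i) x) (gamma Y) = ipX (gamma Z) (gamma Y).
      rewrite hu (ip_suml hX); apply: eq_bigr => j _; by rewrite (ipZl hX).
    by rewrite xY subrr.
  have := psumr_eq0P (fun j _ => d0 j) dsum (i := i) isT.
  move/eqP; rewrite /d mulf_eq0 (negbTE li) /= subr_eq0 => /eqP ei.
  move/ArgminE: Mx => [hlt hgx]; apply/ArgminE; split => //.
  by rewrite -hgx /g phiinv ei.
apply/part2; split => //; exact: simul eqY.
Qed.

Lemma part6 : is_singleton (Argmin f) <-> is_singleton (Argmin g).
Proof.
have [b hb] := hC Y.
split.
  move=> [Z0 hZ0]; exists (gamma Z0).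
  have MZ0 : Argmin f Z0 by rewrite hZ0.
  have [Mg _] := MM_ip MZ0.
  apply/seteqP; split => x /=.
    move=> Mx; have : Argmin f (Lambda b x) by apply/(part3 _ hb).
    have : Argmin f (Lambda b (gamma Z0)) by apply/(part3 _ hb).
    rewrite hZ0 /= => e1 e2; apply: (Lam_inj (b := b)); by rewrite e1 e2.
  by move=> ->.
move=> [x0 hx0].
have cM : convex_set (Argmin g : set (convex_lmodType X)).
  move=> u v l; rewrite hx0 !in_setE /= => -> ->.
  by rewrite convE -scalerDl addrC subrK scale1r.
have cMM := part5f cM.
exists (Lambda b x0).
have MZ0 : Argmin f (Lambda b x0) by apply/(part3 _ hb); rewrite hx0.
apply/seteqP; split => Z /=; last by move=> ->.
move=> MZ.
have h12 : (0 : R) <= 2^-1 by rewrite invr_ge0.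
have h12' : (2^-1 : R) <= 1 by rewrite invf_le1 // ler1n.
have := cMM Z (Lambda b x0) (Itv01 h12 h12'); rewrite !in_setE => /(_ MZ MZ0).
rewrite convE /=.
have -> : (1 - 2^-1 : R) = 2^-1 by field.
move=> MW.
have gx z : Argmin f z -> ipH z z = ipX x0 x0.
  move=> /MM_ip [+ _]; rewrite hx0 /= => e; by rewrite -gam_n e.
set L := Lambda b x0 in MZ0 MW *.
have eW : ipH (2^-1 *: Z + 2^-1 *: L) (2^-1 *: Z + 2^-1 *: L) =
   (ipH Z Z + 2 * ipH Z L + ipH L L) / 4.
  by rewrite (ip_sqD hH) !(ipZl hH) !(ipZr hH); field; rewrite ?pnatr_eq0.
have k : ipH (Z - L) (Z - L) <= 0.
  have := gx _ MW; have := gx _ MZ; have := gx _ MZ0.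
  rewrite (ip_sqB hH) eW => e1 e2 e3.
  lra.
apply/eqP; rewrite -subr_eq0; apply/eqP; exact: (ip_le0 hH).
Qed.

Lemma main_sec : [/\ ereal_inf (range f) = ereal_inf (range g),
    (forall Z : H, Argmin f Z <->
       (Argmin g (gamma Z) /\ exists a, Z = Lambda a (gamma Z) /\ Y = Lambda a (gamma Y))),
    (forall (x : X) (b : A), A_of gamma Lambda Y b -> (Argmin f (Lambda b x) <-> Argmin g x)),
    Argmin f = [set Z | exists x b, [/\ Argmin g x, A_of gamma Lambda Y b & Z = Lambda b x]] &
    ((convex_set (Argmin f : set (convex_lmodType H)) <->
      convex_set (Argmin g : set (convex_lmodType X))) /\
    (is_singleton (Argmin f) <-> is_singleton (Argmin g)))].
Proof.
split.
- exact: infeq.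
- exact: part2.
- by move=> x b hb; apply: part3.
- exact: part4.
- split; last exact: part6.
  split; [exact: part5b | exact: part5f].
Qed.

End Phi.

End SDS.

Unset Implicit Arguments.

Theorem theorem5p1 (R : realType) (H X : vectType R)
  (ipH : H -> H -> R) (ipX : X -> X -> R)
  (S : Type) (mul : S -> S -> S) (one : S) (inv : S -> S) (act : S -> X -> X)
  (gamma : H -> X) (A : Type) (Lambda : A -> {linear X -> H})
  (phi : X -> \bar R) (Y : H) :
  inner_product ipH -> inner_product ipX ->
  group_action_by_linear_isometries ipX mul one inv act ->
  spectral_decomposition_system ipH ipX act gamma Lambda ->
  proper_fun phi -> S_invariant act phi ->
  let MM := Argmin (fun Z : H => (phi (gamma Z) - (ipH Z Y)%:E)%E) in
  let M := Argmin (fun x : X => (phi x - (ipX x (gamma Y))%:E)%E) in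
  [/\ ereal_inf (range (fun Z : H => (phi (gamma Z) - (ipH Z Y)%:E)%E))
      = ereal_inf (range (fun x : X => (phi x - (ipX x (gamma Y))%:E)%E)),
    (forall Z : H, MM Z <->
       (M (gamma Z) /\ exists a, Z = Lambda a (gamma Z) /\ Y = Lambda a (gamma Y))),
    (forall (x : X) (b : A), A_of gamma Lambda Y b -> (MM (Lambda b x) <-> M x)),
    MM = [set Z | exists x b, [/\ M x, A_of gamma Lambda Y b & Z = Lambda b x]] &
    ((convex_set (MM : set (convex_lmodType H)) <-> convex_set (M : set (convex_lmodType X))) /\
    (is_singleton MM <-> is_singleton M))].
Proof.
move=> hH hX [[mulA mul1 mulV] [act1 actM actL actN]] [hLn [tau [tinv torb tgam]] hC hD]
  [phinf _] phiinv MM M.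
rewrite /MM /M.
apply: main_sec; try eassumption.
Qed.
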